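(* Let $\mathcal{C}$ be a deflation-exact category and let $\mathcal{A}\subseteq\mathcal{C}$ be an admissibly deflation-percolating subcategory. Then $S_{\mathcal{A}}=S_{\mathcal{A}}\cap\mathrm{Adm}(\mathcal{C})$; in particular every weak isomorphism is admissible. Moreover, $S_{\mathcal{A}}$ is a right multiplicative system in $\mathcal{C}$ such that the commutative square in axiom RMS2 can always be chosen to be a pullback square; in particular, pullbacks along weak isomorphisms exist.
   Context: A conflation category is an additive category together with a class of kernel-cokernel pairs $A\xrightarrow{f}B\xrightarrow{g}C$ (i.e. $f=\ker g$ and $g=\operatorname{coker} f$), closed under isomorphisms, called conflations; the first morphism of a conflation is called an inflation ($\rightarrowtail$) and the second a deflation ($\twoheadrightarrow$). A deflation-exact category is a conflation category satisfying: (R0) $1_0$ is a deflation; (R1) the composition of two deflations is a deflation; (R2) the pullback of a deflation along any morphism exists and is a deflation. A morphism is admissible if it factors as a deflation followed by an inflation; $\mathrm{Adm}(\mathcal{C})$ is the set of admissible morphisms. A non-empty full subcategory $\mathcal{A}$ of a conflation category $\mathcal{C}$ is admissibly deflation-percolating if: (A1) for every conflation $A'\rightarrowtail A\twoheadrightarrow A''$ in $\mathcal{C}$, $A\in\mathcal{A}$ iff $A',A''\in\mathcal{A}$; (A2) every morphism $C\to A$ with $A\in\mathcal{A}$ factors as a deflation $C\twoheadrightarrow A'$ followed by an inflation $A'\rightarrowtail A$ with $A'\in\mathcal{A}$; (A3) if $a\colon C\rightarrowtail D$ is an inflation and $b\colon C\twoheadrightarrow A$ is a deflation with $A\in\mathcal{A}$,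 then the pushout of $a$ along $b$ exists and in the pushout square the map $D\to P$ is a deflation and $A\to P$ is an inflation. An $\mathcal{A}^{-1}$-inflation is an inflation whose cokernel lies in $\mathcal{A}$; an $\mathcal{A}^{-1}$-deflation is a deflation whose kernel lies in $\mathcal{A}$. The set $S_{\mathcal{A}}$ of weak isomorphisms consists of all finite composites of $\mathcal{A}^{-1}$-inflations and $\mathcal{A}^{-1}$-deflations. A set $S$ of morphisms is a right multiplicative system if: (RMS1) identities are in $S$ and $S$ is closed under composition; (RMS2) for every $f\colon Z\to W$ and $s\colon Y\to W$ with $s\in S$ there exist $t\colon X\to Z$ in $S$ and $g\colon X\to Y$ with $fg'$... precisely $f t = s g$; (RMS3) if $f,g\colon X\to Y$ and $s\in S$ with source $Y$ satisfy $sf=sg$, then there is $t\in S$ with target $X$ such that $ft=gt$. *)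

(* Defs.v *)
From HB Require Import structures.
From mathcomp Require Import all_boot ssralg.
Set Implicit Arguments. Unset Strict Implicit. Unset Printing Implicit Defensive.
Import GRing.Theory.
Local Open Scope ring_scope.

Record AddCat := {
  Ob :> Type;
  Mor : Ob -> Ob -> zmodType;
  idm : forall X, Mor X X;
  comp : forall X Y Z, Mor Y Z -> Mor X Y -> Mor X Z;
  comp_assoc : forall X Y Z W (h : Mor Z W) (g : Mor Y Z) (f : Mor X Y),
      comp h (comp g f) = comp (comp h g) f;
  comp_id_l : forall X Y (f : Mor X Y), comp (idm Y) f = f;
  comp_id_r : forall X Y (f : Mor X Y), comp f (idm X) = f;
  comp_addl : forall X Y Z (g1 g2 : Mor Y Z) (f : Mor X Y),
      comp (g1 + g2) f = comp g1 f + comp g2 f;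
  comp_addr : forall X Y Z (g : Mor Y Z) (f1 f2 : Mor X Y),
      comp g (f1 + f2) = comp g f1 + comp g f2;
  zero_ob : Ob;
  zero_ob_init : forall X (f : Mor zero_ob X), f = 0;
  zero_ob_term : forall X (f : Mor X zero_ob), f = 0;
  biproduct : forall X Y, exists P (i1 : Mor X P) (i2 : Mor Y P)
      (p1 : Mor P X) (p2 : Mor P Y),
      [/\ comp p1 i1 = idm X, comp p2 i2 = idm Y, comp p1 i2 = 0,
          comp p2 i1 = 0 & comp i1 p1 + comp i2 p2 = idm P]
}.

Arguments Mor {_}.
Arguments idm {_}.
Arguments comp {_ _ _ _}.
Arguments zero_ob {_}.

Section Basic.
Variable C : AddCat.

Definition is_iso (X Y : C) (f : Mor X Y) : Prop :=
  exists g : Mor Y X, comp g f = idm X /\ comp f g = idm Y.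

Definition is_kernel (A B D : C) (f : Mor A B) (g : Mor B D) : Prop :=
  comp g f = 0 /\
  forall T (h : Mor T B), comp g h = 0 ->
    exists u : Mor T A, comp f u = h /\ forall u' : Mor T A, comp f u' = h -> u' = u.

Definition is_cokernel (A B D : C) (f : Mor A B) (g : Mor B D) : Prop :=
  comp g f = 0 /\
  forall T (h : Mor B T), comp h f = 0 ->
    exists u : Mor D T, comp u g = h /\ forall u' : Mor D T, comp u' g = h -> u' = u.

Definition is_kernel_cokernel_pair (A B D : C) (f : Mor A B) (g : Mor B D) : Prop :=
  is_kernel f g /\ is_cokernel f g.

Definition is_pullback (P Y Z W : C) (f : Mor Z W) (s : Mor Y W)
    (t : Mor P Z) (g : Mor P Y) : Prop :=
  comp f t = comp s g /\
  forall Q (t' : Mor Q Z) (g' : Mor Q Y), comp f t' = comp s g' ->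
    exists u : Mor Q P, (comp t u = t' /\ comp g u = g') /\
      forall u' : Mor Q P, comp t u' = t' -> comp g u' = g' -> u' = u.

Definition is_pushout (X D A P : C) (a : Mor X D) (b : Mor X A)
    (a' : Mor D P) (b' : Mor A P) : Prop :=
  comp a' a = comp b' b /\
  forall Q (a'' : Mor D Q) (b'' : Mor A Q), comp a'' a = comp b'' b ->
    exists u : Mor P Q, (comp u a' = a'' /\ comp u b' = b'') /\
      forall u' : Mor P Q, comp u' a' = a'' -> comp u' b' = b'' -> u' = u.

End Basic.

Record ConflCat := {
  cc_cat :> AddCat;
  confl : forall A B D : cc_cat, Mor A B -> Mor B D -> Prop;
  confl_kc : forall A B D (f : Mor A B) (g : Mor B D),
      confl f g -> is_kernel_cokernel_pair f g;
  confl_iso : forall A B D A' B' D' (f : Mor A B) (g : Mor B D)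
      (f' : Mor A' B') (g' : Mor B' D') (a : Mor A A') (b : Mor B B') (c : Mor D D'),
      confl f g -> is_iso a -> is_iso b -> is_iso c ->
      comp b f = comp f' a -> comp c g = comp g' b -> confl f' g'
}.

Arguments confl {_ _ _ _}.

Section Conflations.
Variable C : ConflCat.

Definition inflation (A B : C) (f : Mor A B) : Prop :=
  exists D (g : Mor B D), confl f g.

Definition deflation (B D : C) (g : Mor B D) : Prop :=
  exists A (f : Mor A B), confl f g.

Definition admissible (X Y : C) (m : Mor X Y) : Prop :=
  exists M (d : Mor X M) (i : Mor M Y), deflation d /\ inflation i /\ m = comp i d.

Definition deflation_exact : Prop :=
  [/\ deflation (idm (@zero_ob C)),
      (forall X Y Z (g : Mor Y Z) (f : Mor X Y),
          deflation f -> deflation g -> deflation (comp g f))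
    & (forall B D D' (g : Mor B D) (h : Mor D' D), deflation g ->
          exists P (p : Mor P D') (q : Mor P B),
            is_pullback h g p q /\ deflation p)].

(* A full subcategory is given by a predicate on objects. *)
Definition adm_deflation_percolating (SA : C -> Prop) : Prop :=
  [/\ (exists X, SA X),
      (forall A' A A'' (f : Mor A' A) (g : Mor A A''), confl f g ->
          (SA A <-> SA A' /\ SA A'')),
      (forall X A (m : Mor X A), SA A ->
          exists A' (d : Mor X A') (i : Mor A' A),
            [/\ SA A', deflation d, inflation i & m = comp i d])
    &
      (forall X D A (a : Mor X D) (b : Mor X A), inflation a -> deflation b -> SA A ->
          exists P (a' : Mor D P) (b' : Mor A P),
            [/\ is_pushout a b a' b', deflation a' & inflation b'])].

Definition A_inflation (SA : C -> Prop) (X Y : C) (f : Mor X Y) : Prop :=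
  exists D (g : Mor Y D), confl f g /\ SA D.

Definition A_deflation (SA : C -> Prop) (X Y : C) (g : Mor X Y) : Prop :=
  exists K (f : Mor K X), confl f g /\ SA K.

Inductive weak_iso (SA : C -> Prop) : forall X Y : C, Mor X Y -> Prop :=
  | wi_infl : forall X Y (f : Mor X Y), A_inflation SA f -> weak_iso SA f
  | wi_defl : forall X Y (f : Mor X Y), A_deflation SA f -> weak_iso SA f
  | wi_comp : forall X Y Z (g : Mor Y Z) (f : Mor X Y),
      weak_iso SA f -> weak_iso SA g -> weak_iso SA (comp g f).

Definition right_mult_system_pullback (S : forall X Y : C, Mor X Y -> Prop) : Prop :=
  [/\ (forall X, S X X (idm X)),
      (forall X Y Z (g : Mor Y Z) (f : Mor X Y), S _ _ f -> S _ _ g -> S _ _ (comp g f)),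
      (forall Z W Y (f : Mor Z W) (s : Mor Y W), S _ _ s ->
          exists X (t : Mor X Z) (g : Mor X Y),
            [/\ S _ _ t, comp f t = comp s g & is_pullback f s t g])
    & (forall X Y V (f g : Mor X Y) (s : Mor Y V), S _ _ s -> comp s f = comp s g ->
          exists X' (t : Mor X' X), S _ _ t /\ comp f t = comp g t)].

End Conflations.

(* Main.v *)
Require Import Defs.
From mathcomp Require Import all_boot ssralg.
Set Implicit Arguments. Unset Strict Implicit. Unset Printing Implicit Defensive.
Import GRing.Theory.
Local Open Scope ring_scope.
Local Notation comp := Defs.comp.

Lemma comp0l (C : AddCat) (X Y Z : C) (f : Mor X Y) : comp (0 : Mor Y Z) f = 0.
Proof.
have H := comp_addl (0 : Mor Y Z) 0 f; rewrite addr0 in H.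
by have := congr1 (fun x => x - comp (0 : Mor Y Z) f) H; rewrite addrK subrr.
Qed.

Lemma comp0r (C : AddCat) (X Y Z : C) (g : Mor Y Z) : comp g (0 : Mor X Y) = 0.
Proof.
have H := comp_addr g (0 : Mor X Y) 0; rewrite addr0 in H.
by have := congr1 (fun x => x - comp g (0 : Mor X Y)) H; rewrite addrK subrr.
Qed.

Lemma compNl (C : AddCat) (X Y Z : C) (g : Mor Y Z) (f : Mor X Y) : comp (- g) f = - comp g f.
Proof. by apply/eqP; rewrite -subr_eq0 opprK -comp_addl addNr comp0l. Qed.

Lemma compNr (C : AddCat) (X Y Z : C) (g : Mor Y Z) (f : Mor X Y) : comp g (- f) = - comp g f.
Proof. by apply/eqP; rewrite -subr_eq0 opprK -comp_addr addNr comp0r. Qed.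

Lemma compBl (C : AddCat) (X Y Z : C) (g1 g2 : Mor Y Z) (f : Mor X Y) :
  comp (g1 - g2) f = comp g1 f - comp g2 f.
Proof. by rewrite comp_addl compNl. Qed.

Lemma compBr (C : AddCat) (X Y Z : C) (g : Mor Y Z) (f1 f2 : Mor X Y) :
  comp g (f1 - f2) = comp g f1 - comp g f2.
Proof. by rewrite comp_addr compNr. Qed.

Definition mono (C : AddCat) (A B : C) (f : Mor A B) :=
  forall T (x y : Mor T A), comp f x = comp f y -> x = y.
Definition epi (C : AddCat) (A B : C) (f : Mor A B) :=
  forall T (x y : Mor B T), comp x f = comp y f -> x = y.

Lemma mono_zero (C : AddCat) (A B : C) (f : Mor A B) :
  (forall T (x : Mor T A), comp f x = 0 -> x = 0) -> mono f.
Proof.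
move=> H T x y E; apply/eqP; rewrite -subr_eq0; apply/eqP/H.
by rewrite compBr E subrr.
Qed.

Lemma mono0 (C : AddCat) (A B : C) (f : Mor A B) T (x : Mor T A) :
  mono f -> comp f x = 0 -> x = 0.
Proof. by move=> M E; apply: M; rewrite E comp0r. Qed.

Lemma epi0 (C : AddCat) (A B : C) (f : Mor A B) T (x : Mor B T) :
  epi f -> comp x f = 0 -> x = 0.
Proof. by move=> M E; apply: M; rewrite E comp0l. Qed.

Lemma mono_comp (C : AddCat) (A B D : C) (f : Mor A B) (g : Mor B D) :
  mono f -> mono g -> mono (comp g f).
Proof. by move=> Mf Mg T x y; rewrite -!comp_assoc => /Mg /Mf. Qed.

Lemma epi_comp (C : AddCat) (A B D : C) (f : Mor A B) (g : Mor B D) :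
  epi f -> epi g -> epi (comp g f).
Proof. by move=> Mf Mg T x y; rewrite !comp_assoc => /Mf /Mg. Qed.

Lemma epi_of_comp (C : AddCat) (A B D : C) (f : Mor A B) (g : Mor B D) :
  epi (comp g f) -> epi g.
Proof. by move=> M T x y E; apply: M; rewrite !comp_assoc E. Qed.

Lemma kernel_mono (C : AddCat) (A B D : C) (f : Mor A B) (g : Mor B D) :
  is_kernel f g -> mono f.
Proof.
case=> gf0 H T x y E.
have h0 : comp g (comp f y) = 0 by rewrite comp_assoc gf0 comp0l.
have [u [_ U]] := H T _ h0.
by rewrite (U x E) (U y erefl).
Qed.

Lemma cokernel_epi (C : AddCat) (A B D : C) (f : Mor A B) (g : Mor B D) :
  is_cokernel f g -> epi g.
Proof.
case=> gf0 H T x y E.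
have h0 : comp (comp y g) f = 0 by rewrite -comp_assoc gf0 comp0r.
have [u [_ U]] := H T _ h0.
by rewrite (U x E) (U y erefl).
Qed.

Lemma ker_lift (C : AddCat) (A B D : C) (f : Mor A B) (g : Mor B D) T (h : Mor T B) :
  is_kernel f g -> comp g h = 0 -> exists u, comp f u = h.
Proof. by case=> _ H /H [u [? _]]; exists u. Qed.

Lemma coker_desc (C : AddCat) (A B D : C) (f : Mor A B) (g : Mor B D) T (h : Mor B T) :
  is_cokernel f g -> comp h f = 0 -> exists u, comp u g = h.
Proof. by case=> _ H /H [u [? _]]; exists u. Qed.

Lemma iso_id (C : AddCat) (X : C) : is_iso (idm X).
Proof. by exists (idm X); rewrite comp_id_l. Qed.

Lemma kernel_unique (C : AddCat) (A A' B D : C) (f : Mor A B) (f' : Mor A' B) (g : Mor B D) :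
  is_kernel f g -> is_kernel f' g -> exists a : Mor A A', is_iso a /\ comp f' a = f.
Proof.
move=> Kf Kf'.
have [a Ea] := ker_lift Kf' Kf.1.
have [b Eb] := ker_lift Kf Kf'.1.
exists a; split=> //; exists b; split.
- by apply: (kernel_mono Kf); rewrite comp_assoc Eb Ea comp_id_r.
- by apply: (kernel_mono Kf'); rewrite comp_assoc Ea Eb comp_id_r.
Qed.

Lemma cokernel_unique (C : AddCat) (A B D D' : C) (f : Mor A B) (g : Mor B D) (g' : Mor B D') :
  is_cokernel f g -> is_cokernel f g' -> exists c : Mor D D', is_iso c /\ comp c g = g'.
Proof.
move=> Kg Kg'.
have [a Ea] := coker_desc Kg Kg'.1.
have [b Eb] := coker_desc Kg' Kg.1.
exists a; split=> //; exists b; split.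
- by apply: (cokernel_epi Kg); rewrite -comp_assoc Ea Eb comp_id_l.
- by apply: (cokernel_epi Kg'); rewrite -comp_assoc Eb Ea comp_id_l.
Qed.


Lemma confl_ker (C : ConflCat) (A B D : C) (f : Mor A B) (g : Mor B D) :
  confl f g -> is_kernel f g.
Proof. by case/confl_kc. Qed.

Lemma confl_coker (C : ConflCat) (A B D : C) (f : Mor A B) (g : Mor B D) :
  confl f g -> is_cokernel f g.
Proof. by case/confl_kc. Qed.

Lemma confl_mono (C : ConflCat) (A B D : C) (f : Mor A B) (g : Mor B D) :
  confl f g -> mono f.
Proof. by move/confl_ker/kernel_mono. Qed.

Lemma confl_epi (C : ConflCat) (A B D : C) (f : Mor A B) (g : Mor B D) :
  confl f g -> epi g.
Proof. by move/confl_coker/cokernel_epi. Qed.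

Lemma confl0 (C : ConflCat) (A B D : C) (f : Mor A B) (g : Mor B D) :
  confl f g -> comp g f = 0.
Proof. by case/confl_ker. Qed.

Lemma confl_ker_repl (C : ConflCat) (A A' B D : C) (f : Mor A B) (f' : Mor A' B) (g : Mor B D) :
  confl f g -> is_kernel f' g -> confl f' g.
Proof.
move=> Cf Kf'; have [a [Ia Ea]] := kernel_unique (confl_ker Cf) Kf'.
apply: (confl_iso (a := a) (b := idm B) (c := idm D) Cf Ia (iso_id _) (iso_id _)).
- by rewrite comp_id_l Ea.
- by rewrite comp_id_l comp_id_r.
Qed.

Lemma confl_coker_repl (C : ConflCat) (A B D D' : C) (f : Mor A B) (g : Mor B D) (g' : Mor B D') :
  confl f g -> is_cokernel f g' -> confl f g'.
Proof.
move=> Cf Kg'; have [c [Ic Ec]] := cokernel_unique (confl_coker Cf) Kg'.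
apply: (confl_iso (a := idm A) (b := idm B) (c := c) Cf (iso_id _) (iso_id _) Ic).
- by rewrite comp_id_l comp_id_r.
- by rewrite comp_id_r Ec.
Qed.

Lemma defl_ker (C : ConflCat) (A B D : C) (f : Mor A B) (g : Mor B D) :
  deflation g -> is_kernel f g -> confl f g.
Proof. by case=> A0 [f0 Cf0] K; apply: confl_ker_repl Cf0 K. Qed.

Lemma infl_coker (C : ConflCat) (A B D : C) (f : Mor A B) (g : Mor B D) :
  inflation f -> is_cokernel f g -> confl f g.
Proof. by case=> D0 [g0 Cg0] K; apply: confl_coker_repl Cg0 K. Qed.

Lemma defl_epi (C : ConflCat) (B D : C) (g : Mor B D) : deflation g -> epi g.
Proof. by case=> A [f /confl_epi]. Qed.

Lemma infl_mono (C : ConflCat) (B D : C) (g : Mor B D) : inflation g -> mono g.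
Proof. by case=> A [f /confl_mono]. Qed.

Lemma confl_isoL (C : ConflCat) (A B D D' : C) (f : Mor A B) (g : Mor B D) (c : Mor D D') :
  confl f g -> is_iso c -> confl f (comp c g).
Proof.
move=> Cf Ic.
apply: (confl_iso (a := idm A) (b := idm B) (c := c) Cf (iso_id _) (iso_id _) Ic).
- by rewrite comp_id_l comp_id_r.
- by rewrite comp_id_r.
Qed.

Lemma confl_isoR (C : ConflCat) (A B B' D : C) (f : Mor A B) (g : Mor B D) (p : Mor B' B) (pi : Mor B B') :
  confl f g -> comp p pi = idm B -> comp pi p = idm B' -> confl (comp pi f) (comp g p).
Proof.
move=> Cf E1 E2.
apply: (confl_iso (a := idm A) (b := pi) (c := idm D) Cf (iso_id _) _ (iso_id _)).
- by exists p.
- by rewrite comp_id_r.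
- by rewrite comp_id_l -comp_assoc E1 comp_id_r.
Qed.

Lemma infl_epi_iso (C : ConflCat) (A B : C) (m : Mor A B) :
  inflation m -> epi m -> exists u, comp u m = idm A /\ comp m u = idm B.
Proof.
case=> D [c Cm] Em.
have c0 : c = 0 by apply: (epi0 Em); apply: confl0 Cm.
have h0 : comp c (idm B) = 0 by rewrite c0 comp0l.
have [u Eu] := ker_lift (confl_ker Cm) h0.
exists u; split=> //.
by apply: (confl_mono Cm); rewrite comp_assoc Eu comp_id_l comp_id_r.
Qed.

Definition is_zero (C : AddCat) (Z : C) := idm Z = 0.

Lemma zero_from (C : AddCat) (Z T : C) (f : Mor Z T) : is_zero Z -> f = 0.
Proof. by move=> E; rewrite -(comp_id_r f) E comp0r. Qed.

Lemma zero_to (C : AddCat) (Z T : C) (f : Mor T Z) : is_zero Z -> f = 0.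
Proof. by move=> E; rewrite -(comp_id_l f) E comp0l. Qed.

Lemma zero_to_eq (C : AddCat) (Z T : C) (f g : Mor T Z) : is_zero Z -> f = g.
Proof. by move=> E; rewrite (zero_to f E) (zero_to g E). Qed.

Lemma zero_ob_zero (C : AddCat) : is_zero (@zero_ob C).
Proof. exact: zero_ob_init. Qed.

Lemma pullback_sym (C : AddCat) (P Y Z W : C) (f : Mor Z W) (s : Mor Y W) (t : Mor P Z) (g : Mor P Y) :
  is_pullback f s t g -> is_pullback s f g t.
Proof.
case=> E H; split=> [|Q t' g' E']; first by rewrite E.
have [u [[U1 U2] U3]] := H Q g' t' (esym E').
by exists u; split=> // u' A B; apply: U3.
Qed.

Lemma pb_mono (C : AddCat) (P Y Z W : C) (f : Mor Z W) (s : Mor Y W) (t : Mor P Z) (g : Mor P Y) :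
  is_pullback f s t g -> mono s -> mono t.
Proof.
case=> E H Ms T x y Exy.
have E1 : comp f (comp t y) = comp s (comp g y) by rewrite !comp_assoc E.
have [u [_ U]] := H T _ _ E1.
have Egy : comp g x = comp g y.
  by apply: Ms; rewrite !comp_assoc -E -!comp_assoc Exy.
by rewrite (U x Exy Egy) (U y erefl erefl).
Qed.

Lemma pb_kernel_leg (C : AddCat) (P Y Z W V : C) (f : Mor Z W) (s : Mor Y W) (w : Mor W V)
    (t : Mor P Z) (g : Mor P Y) :
  is_kernel s w -> is_pullback f s t g -> is_kernel t (comp w f).
Proof.
move=> Ks PB; have [E H] := PB.
split; first by rewrite -comp_assoc E comp_assoc Ks.1 comp0l.
move=> T h Eh.
have Eh' : comp w (comp f h) = 0 by rewrite comp_assoc.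
have [y Ey] := ker_lift Ks Eh'.
have [u [[U1 U2] _]] := H T h y (esym Ey).
exists u; split=> // u' Eu'.
by apply: (pb_mono PB (kernel_mono Ks)); rewrite U1.
Qed.

Lemma pb_kernel_transfer (C : AddCat) (A B D D' P : C) (f : Mor A B) (g : Mor B D)
    (h : Mor D' D) (p : Mor P D') (q : Mor P B) :
  is_kernel f g -> is_pullback h g p q -> exists k : Mor A P, is_kernel k p.
Proof.
move=> Kf PB; have [E H] := PB.
have E0 : comp h (0 : Mor A D') = comp g f by rewrite comp0r Kf.1.
have [k [[K1 K2] _]] := H A 0 f E0.
exists k; split=> // T x Ex.
have Eg : comp g (comp q x) = 0 by rewrite comp_assoc -E -comp_assoc Ex comp0r.
have [y Ey] := ker_lift Kf Eg.
have Ekq : comp h (comp p x) = comp g (comp q x) by rewrite !comp_assoc E.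
have [u [_ U]] := H T _ _ Ekq.
have Eky : comp k y = x.
  rewrite (U x erefl erefl); apply: U; first by rewrite comp_assoc K1 comp0l Ex.
  by rewrite comp_assoc K2 Ey.
exists y; split=> // y' Ey'.
by apply: (kernel_mono Kf); rewrite -K2 -!comp_assoc Ey' Eky.
Qed.

Lemma po_coker (C : ConflCat) (X D Eo A P : C) (a : Mor X D) (c : Mor D Eo) (b : Mor X A)
    (a' : Mor D P) (b' : Mor A P) :
  confl a c -> is_pushout a b a' b' ->
  exists rho : Mor P Eo, [/\ comp rho a' = c, comp rho b' = 0 & is_cokernel b' rho].
Proof.
move=> Ca [E H].
have E0 : comp c a = comp (0 : Mor A Eo) b by rewrite comp0l (confl0 Ca).
have [rho [[R1 R2] _]] := H Eo c 0 E0.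
exists rho; split=> //; split=> // T x Ex.
have Ex' : comp (comp x a') a = 0 by rewrite -comp_assoc E comp_assoc Ex comp0l.
have [v Ev] := coker_desc (confl_coker Ca) Ex'.
have Exx : comp (comp x a') a = comp (comp x b') b by rewrite -!comp_assoc E.
have [u [_ U]] := H T _ _ Exx.
have Evr : comp v rho = x.
  rewrite (U x erefl erefl); apply: U; first by rewrite -comp_assoc R1 Ev.
  by rewrite -comp_assoc R2 comp0r Ex.
exists v; split=> // v' Ev'.
by apply: (confl_epi Ca); rewrite -R1 !comp_assoc Ev' Evr.
Qed.

Lemma po_ker (C : ConflCat) (X D Eo A P K : C) (a : Mor X D) (c : Mor D Eo) (b : Mor X A)
    (a' : Mor D P) (b' : Mor A P) (k : Mor K X) :
  confl a c -> is_pushout a b a' b' -> mono b' -> is_kernel k b -> is_kernel (comp a k) a'.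
Proof.
move=> Ca PO Mb Kk.
have [rho [R1 R2 _]] := po_coker Ca PO.
have [E _] := PO.
split; first by rewrite comp_assoc E -comp_assoc Kk.1 comp0r.
move=> T h Eh.
have Ec : comp c h = 0 by rewrite -R1 -comp_assoc Eh comp0r.
have [h' Eh'] := ker_lift (confl_ker Ca) Ec.
have Eb : comp b h' = 0.
  by apply: (mono0 Mb); rewrite comp_assoc -E -comp_assoc Eh' Eh.
have [h'' Eh''] := ker_lift Kk Eb.
exists h''; split; first by rewrite -comp_assoc Eh'' Eh'.
move=> u' Eu'; apply: (mono_comp (kernel_mono Kk) (confl_mono Ca)).
by rewrite Eu' -comp_assoc Eh'' Eh'.
Qed.

Lemma is_kernel0_id (C : AddCat) (X : C) : is_kernel (0 : Mor zero_ob X) (idm X).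
Proof.
split; first by rewrite comp0r.
move=> T h; rewrite comp_id_l => ->; exists 0; split; first by rewrite comp0r.
by move=> u' _; apply: zero_to; apply: zero_ob_zero.
Qed.

Lemma defl_id0 (C : ConflCat) (X : C) : deflation_exact C -> confl (0 : Mor zero_ob X) (idm X).
Proof.
case=> R0 R1 R2.
have [P [p [q [[E H] Dp]]]] := R2 _ _ _ (idm zero_ob) (0 : Mor X zero_ob) R0.
have E1 : comp (0 : Mor X zero_ob) (idm X) = comp (idm zero_ob) (0 : Mor X zero_ob).
  by rewrite comp0l comp0r.
have [u [[U1 U2] _]] := H X (idm X) 0 E1.
have E2 : comp (0 : Mor X zero_ob) p = comp (idm zero_ob) q by [].
have [v [_ V]] := H P p q E.
have Eup : comp u p = idm P.
  rewrite (V (comp u p)); last 2 first.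
  - by rewrite comp_assoc U1 comp_id_l.
  - by apply: zero_to_eq; apply: zero_ob_zero.
  by rewrite (V (idm P)) // comp_id_r.
case: Dp => L [kap Ck].
have := confl_isoR Ck Eup U1; rewrite U1 => Ck'.
exact: confl_ker_repl Ck' (is_kernel0_id X).
Qed.

Lemma SA_zero (C : ConflCat) (SA : C -> Prop) :
  deflation_exact C -> adm_deflation_percolating SA -> SA zero_ob.
Proof.
move=> DE [[X0 S0] A1 _ _].
by have /A1 [] := defl_id0 X0 DE => /(_ S0) [].
Qed.

Lemma id_A_defl (C : ConflCat) (SA : C -> Prop) (X : C) :
  deflation_exact C -> adm_deflation_percolating SA -> A_deflation SA (idm X).
Proof.
move=> DE PC; exists zero_ob, 0; split; first exact: defl_id0.
exact: SA_zero DE PC.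
Qed.

Lemma id_A_infl (C : ConflCat) (SA : C -> Prop) (X : C) :
  deflation_exact C -> adm_deflation_percolating SA -> A_inflation SA (idm X).
Proof.
move=> DE PC; have S0 := SA_zero DE PC.
case: PC => _ _ A2 _.
have [A' [d [i [SA' Dd Ii _]]]] := A2 X _ (0 : Mor X zero_ob) S0.
have ZA' : is_zero A'.
  by apply: (infl_mono Ii); apply: zero_to_eq; apply: zero_ob_zero.
have Kd : is_kernel (idm X) d.
  split; first exact: zero_to.
  move=> T h _; exists h; split; first by rewrite comp_id_l.
  by move=> u'; rewrite comp_id_l.
have Cd := defl_ker Dd Kd.
exists zero_ob, 0; split=> //.
apply: confl_coker_repl Cd _; split; first by rewrite comp0l.
move=> T h; rewrite comp_id_r => ->; exists 0; split; first by rewrite comp0l.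
by move=> u' _; apply: zero_from; apply: zero_ob_zero.
Qed.

Lemma A_defl_comp (C : ConflCat) (SA : C -> Prop) (X Y Z : C) (d1 : Mor X Y) (d2 : Mor Y Z) :
  deflation_exact C -> adm_deflation_percolating SA ->
  A_deflation SA d1 -> A_deflation SA d2 -> A_deflation SA (comp d2 d1).
Proof.
case=> R0 R1 R2 [_ A1 _ _] [K1 [k1 [C1 S1]]] [K2 [k2 [C2 S2]]].
have Dd : deflation (comp d2 d1) by apply: R1; [exists K1, k1 | exists K2, k2].
have Dd1 : deflation d1 by exists K1, k1.
have [P [p [q [PB Dp]]]] := R2 _ _ _ d1 k2 Dd1.
have [k Kk] := pb_kernel_transfer (confl_ker C1) PB.
have Ck := defl_ker Dp Kk.
have SP : SA P by apply/(A1 _ _ _ _ _ Ck).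
exists P, q; split=> //.
exact: defl_ker Dd (pb_kernel_leg (confl_ker C2) (pullback_sym PB)).
Qed.

Lemma A_infl_comp (C : ConflCat) (SA : C -> Prop) (X Y Z : C) (i1 : Mor X Y) (i2 : Mor Y Z) :
  adm_deflation_percolating SA ->
  A_inflation SA i1 -> A_inflation SA i2 -> A_inflation SA (comp i2 i1).
Proof.
case=> [_ A1 _ A3] [A1o [c1 [C1 S1]]] [A2o [c2 [C2 S2]]].
have Ii2 : inflation i2 by exists A2o, c2.
have Dc1 : deflation c1 by exists X, i1.
have [P [a' [b' [PO Da' Ib']]]] := A3 _ _ _ i2 c1 Ii2 Dc1 S1.
have K := po_ker C2 PO (infl_mono Ib') (confl_ker C1).
have [rho [_ _ Kr]] := po_coker C2 PO.
have Cb := infl_coker Ib' Kr.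
exists P, a'; split; first exact: defl_ker Da' K.
by apply/(A1 _ _ _ _ _ Cb).
Qed.

Lemma defl_into_A (C : ConflCat) (SA : C -> Prop) (Y A Z : C) (w : Mor Y A) (x : Mor Z Y) :
  adm_deflation_percolating SA -> SA A -> epi (comp w x) -> deflation w.
Proof.
case=> [_ _ A2 _] SAA Ep.
have [A' [e [m [_ [K [ka Ck]] Im E]]]] := A2 _ _ w SAA.
have Em : epi m by apply: (@epi_of_comp _ _ _ _ (comp e x)); rewrite comp_assoc -E.
have [u [U1 U2]] := infl_epi_iso Im Em.
exists K, ka; rewrite E; apply: confl_isoL Ck _.
by exists u.
Qed.

Lemma swap_lemma (C : ConflCat) (SA : C -> Prop) (X Y Z : C) (i : Mor X Y) (d : Mor Y Z) :
  deflation_exact C -> adm_deflation_percolating SA ->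
  A_inflation SA i -> A_deflation SA d ->
  exists (M : C) (d' : Mor X M) (i' : Mor M Z),
    [/\ A_deflation SA d', A_inflation SA i' & comp d i = comp i' d'].
Proof.
move=> DE PC [A1o [c1 [Ci S1]]] [K [k [Cd SK]]].
have PC' := PC; case: PC' => [_ A1 A2 A3].
have DE' := DE; case: DE' => [R0 R1 R2].
have [A' [e [j [SA' De Ij Ecj]]]] := A2 _ _ (comp c1 k) S1.
have Ik : inflation k by exists Z, d.
have [P [q [b' [PO Dq Ib']]]] := A3 _ _ _ k e Ik De SA'.
have [r [Rq Rb Kr]] := po_coker Cd PO.
have Cr := infl_coker Ib' Kr.
have [s [[Sq Sb] _]] := PO.2 A1o c1 j Ecj.
have Ds : deflation s.
  by apply: (defl_into_A (x := q) PC S1); rewrite Sq; apply: (confl_epi Ci).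
case: Ds => X'' [u Cs].
have [Q [p [g [PB Dp]]]] := R2 _ _ _ q u Dq.
case: De => K' [k' Ck'].
have SK' : SA K' by have /A1 [] := Ck' => /(_ SK) [].
have Kkq := po_ker Cd PO (infl_mono Ib') (confl_ker Ck').
have Ckq := defl_ker Dq Kkq.
have [k0 Kk0] := pb_kernel_transfer (confl_ker Ckq) PB.
have Ck0 := defl_ker Dp Kk0.
have Kg := pb_kernel_leg (confl_ker Cs) (pullback_sym PB).
rewrite Sq in Kg.
have [phi [[psi [Psi1 Psi2]] Ephi]] := kernel_unique (confl_ker Ci) Kg.
have Dd' : A_deflation SA (comp p phi).
  exists K', (comp psi k0); split=> //.
  exact: confl_isoR Ck0 Psi2 Psi1.
case: Ij => A3o [cj Cj].
have SA3 : SA A3o by have /A1 [] := Cj => /(_ S1) [].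
have Et : comp (comp cj s) b' = 0 by rewrite -comp_assoc Sb (confl0 Cj).
have [w Ew] := coker_desc (confl_coker Cr) Et.
have Dw : deflation w.
  apply: (defl_into_A (x := r) PC SA3); rewrite Ew.
  apply: epi_comp; last exact: (confl_epi Cj).
  apply: (@epi_of_comp _ _ _ _ q); rewrite Sq; exact: (confl_epi Ci).
have Mru : mono (comp r u).
  apply: mono_zero => T x Ex.
  rewrite -comp_assoc in Ex.
  have [z Ez] := ker_lift (confl_ker Cr) Ex.
  have Ejz : comp j z = 0 by rewrite -Sb -comp_assoc Ez comp_assoc (confl0 Cs) comp0l.
  have z0 : z = 0 by apply: (mono0 (confl_mono Cj)).
  apply: (mono0 (confl_mono Cs)); by rewrite -Ez z0 comp0r.
have Kru : is_kernel (comp r u) w.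
  split; first by rewrite comp_assoc Ew -comp_assoc (confl0 Cs) comp0r.
  move=> T h Eh.
  have Dr : deflation r by exists A', b'.
  have [Q' [p' [g' [[PB1 PB2] Dp']]]] := R2 _ _ _ r h Dr.
  have Eg1 : comp cj (comp s g') = 0.
    by rewrite comp_assoc -Ew -comp_assoc -PB1 comp_assoc Eh comp0l.
  have [g1 Eg1'] := ker_lift (confl_ker Cj) Eg1.
  have Eg2 : comp s (g' - comp b' g1) = 0.
    by rewrite compBr comp_assoc Sb Eg1' subrr.
  have [g2 Eg2'] := ker_lift (confl_ker Cs) Eg2.
  have Erug2 : comp (comp r u) g2 = comp h p'.
    by rewrite -comp_assoc Eg2' compBr comp_assoc Rb comp0l subr0 PB1.
  case: Dp' => L [kap Ckap].
  have Eg2k : comp g2 kap = 0.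
    apply: (mono0 Mru); by rewrite comp_assoc Erug2 -comp_assoc (confl0 Ckap) comp0r.
  have [g3 Eg3] := coker_desc (confl_coker Ckap) Eg2k.
  exists g3; split.
    apply: (confl_epi Ckap); by rewrite -comp_assoc Eg3 Erug2.
  move=> u' Eu'; apply: Mru.
  apply: (confl_epi Ckap); by rewrite Eu' -comp_assoc Eg3 Erug2.
have Cru := defl_ker Dw Kru.
exists X'', (comp p phi), (comp r u); split=> //; first by exists A3o, w.
by rewrite -comp_assoc (comp_assoc u) PB.1 -Ephi !comp_assoc Rq.
Qed.

Definition nf (C : ConflCat) (SA : C -> Prop) (X Y : C) (s : Mor X Y) :=
  exists (M : C) (d : Mor X M) (i : Mor M Y),
    [/\ A_deflation SA d, A_inflation SA i & s = comp i d].

Lemma weak_iso_nf (C : ConflCat) (SA : C -> Prop) (X Y : C) (s : Mor X Y) :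
  deflation_exact C -> adm_deflation_percolating SA -> weak_iso SA s -> nf SA s.
Proof.
move=> DE PC; elim=> {X Y s}.
- move=> X Y f H; exists X, (idm X), f; split=> //; last by rewrite comp_id_r.
  exact: id_A_defl.
- move=> X Y f H; exists Y, f, (idm Y); split=> //; last by rewrite comp_id_l.
  exact: id_A_infl.
- move=> X Y Z g f _ [M1 [d1 [i1 [D1 I1 ->]]]] _ [M2 [d2 [i2 [D2 I2 ->]]]].
  have [M [d' [i' [D' I' E]]]] := swap_lemma DE PC I1 D2.
  exists M, (comp d' d1), (comp i2 i'); split.
  + exact: A_defl_comp DE PC D1 D'.
  + exact: A_infl_comp PC I' I2.
  + by rewrite -!comp_assoc (comp_assoc d2) E !comp_assoc.
Qed.

Lemma pb_paste (C : AddCat) (Z W M Z' Y P : C) (f : Mor Z W) (i : Mor M W) (t : Mor Z' Z)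
    (g1 : Mor Z' M) (d : Mor Y M) (p : Mor P Z') (q : Mor P Y) :
  is_pullback f i t g1 -> is_pullback g1 d p q -> is_pullback f (comp i d) (comp t p) q.
Proof.
move=> [E1 H1] [E2 H2]; split.
  by rewrite comp_assoc E1 -comp_assoc E2 comp_assoc.
move=> Q t' g' E.
have E' : comp f t' = comp i (comp d g') by rewrite E -comp_assoc.
have [u1 [[U1a U1b] U1]] := H1 Q t' (comp d g') E'.
have [u2 [[U2a U2b] U2]] := H2 Q u1 g' U1b.
exists u2; split; first by rewrite -comp_assoc U2a U1a.
move=> u' Ea Eb; apply: U2 => //; apply: U1; first by rewrite comp_assoc.
by rewrite comp_assoc E2 -comp_assoc Eb.
Qed.

Lemma rms2 (C : ConflCat) (SA : C -> Prop) (Z W Y : C) (f : Mor Z W) (s : Mor Y W) :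
  deflation_exact C -> adm_deflation_percolating SA -> weak_iso SA s ->
  exists (X : C) (t : Mor X Z) (g : Mor X Y),
    [/\ weak_iso SA t, comp f t = comp s g & is_pullback f s t g].
Proof.
move=> DE PC /(weak_iso_nf DE PC) [M [d [i [[K [k [Cd SK]]] [A1o [c [Ci S1]]] ->]]]].
have PC' := PC; case: PC' => [_ A1 A2 A3].
have DE' := DE; case: DE' => [R0 R1 R2].
have [A' [e [m [SA' [Z' [t Ct]] Im E]]]] := A2 _ _ (comp c f) S1.
have Eft : comp c (comp f t) = 0 by rewrite comp_assoc E -comp_assoc (confl0 Ct) comp0r.
have [g1 Eg1] := ker_lift (confl_ker Ci) Eft.
have PB1 : is_pullback f i t g1.
  split; first by rewrite Eg1.
  move=> Q t' g' Et'.
  have Ee : comp e t' = 0.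
    apply: (mono0 (infl_mono Im)); by rewrite comp_assoc -E -comp_assoc Et' comp_assoc (confl0 Ci) comp0l.
  have [u Eu] := ker_lift (confl_ker Ct) Ee.
  exists u; split; last by move=> u' Eu' _; apply: (confl_mono Ct); rewrite Eu' Eu.
  split=> //; apply: (confl_mono Ci); by rewrite comp_assoc Eg1 -comp_assoc Eu.
have Dd : deflation d by exists K, k.
have [P [p [q [PB2 Dp]]]] := R2 _ _ _ d g1 Dd.
have [k0 Kk0] := pb_kernel_transfer (confl_ker Cd) PB2.
have PB := pb_paste PB1 PB2.
exists P, (comp t p), q; split=> //; last exact: PB.1.
apply: wi_comp; first by apply: wi_defl; exists K, k0; split=> //; exact: defl_ker Dp Kk0.
by apply: wi_infl; exists A', e.
Qed.

Lemma rms3 (C : ConflCat) (SA : C -> Prop) (X Y V : C) (f g : Mor X Y) (s : Mor Y V) :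
  deflation_exact C -> adm_deflation_percolating SA -> weak_iso SA s -> comp s f = comp s g ->
  exists (X' : C) (t : Mor X' X), weak_iso SA t /\ comp f t = comp g t.
Proof.
move=> DE PC /(weak_iso_nf DE PC) [M [d [i [[K [k [Cd SK]]] [A1o [c [Ci S1]]] ->]]]] E.
case: PC => [_ A1 A2 A3].
have Edf : comp d f = comp d g by apply: (confl_mono Ci); rewrite !comp_assoc.
have Ed : comp d (f - g) = 0 by rewrite compBr Edf subrr.
have [h Eh] := ker_lift (confl_ker Cd) Ed.
have [A' [e [m [SA' [Z' [t Ct]] Im Em]]]] := A2 _ _ h SK.
exists Z', t; split; first by apply: wi_infl; exists A', e.
apply/eqP; rewrite -subr_eq0 -compBl -Eh Em -!comp_assoc (confl0 Ct) !comp0r.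
by [].
Qed.

Theorem mainTheorem1 (C : ConflCat) (SA : C -> Prop) :
  deflation_exact C -> adm_deflation_percolating SA ->
  (forall (X Y : C) (s : Mor X Y), weak_iso SA s <-> weak_iso SA s /\ admissible s) /\
  right_mult_system_pullback (@weak_iso C SA).
Proof.
move=> DE PC; split.
  move=> X Y s; split; last by case.
  move=> H; split=> //.
  have [M [d [i [[K [k [Cd _]]] [A [c [Ci _]]] E]]]] := weak_iso_nf DE PC H.
  by exists M, d, i; split; [exists K, k | split=> //; exists A, c].
split.
- by move=> X; apply: wi_defl; apply: id_A_defl.
- by move=> X Y Z g f; apply: wi_comp.
- by move=> Z W Y f s; apply: rms2.
- by move=> X Y V f g s; apply: rms3.
Qed.
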